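(* Let $L>0$, $\mathbb{T}=[0,L]$ with periodic boundary conditions, $N\ge1$, $D_i>0$, $h_{ij}\in\mathbb{R}$, and $K:\mathbb{T}\to\mathbb{R}$, $K\ge0$, a zero-mean probability density that is twice differentiable with $K'\in L^\infty(\mathbb{T})$. Let $u_0\in C^2(\mathbb{T})^N$ with $u_0(x)>0$ for all $x\in\mathbb{T}$, and let $u=(u_1,\dots,u_N)\in C^1((0,T_* ),L^2(\mathbb{T}))^N\cap C^0((0,T_* ),C^2(\mathbb{T}))^N$ be the solution of \[ \partial_tu_i=D_i\partial_x^2u_i-\partial_x\Big[u_i\,\partial_x\sum_{j=1}^Nh_{ij}(K\ast u_j)\Big],\quad i=1,\dots,N,\qquad u(\cdot,0)=u_0, \] where $T_*=\infty$ if $\|u(t)\|_{L^1}$ is bounded for all time and otherwise $T_*$ is the earliest time at which $\|u(t)\|_{L^1}=2\|u_0\|_{L^1}$. Then $u(x,t)>0$ (componentwise) for all $x\in\mathbb{T}$ and $t<T_*$.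
   Context: $(K\ast f)(x)=\int_0^LK(x-y)f(y)\,dy$ with periodic extension; for vector-valued $g$, $\|g\|_{L^1}=\sum_i\|g_i\|_{L^1}$. The solution is the unique (mild, and here classical) solution of the system constructed from the initial datum. *)

(* Defs.v *)
From Stdlib Require Import Reals.
From Coquelicot Require Import Coquelicot.
Open Scope R_scope.

(* Functions on the torus T = [0,L] are L-periodic functions on R. *)
Definition periodic (L : R) (f : R -> R) : Prop := forall x, f (x + L) = f x.

Definition conv (L : R) (K f : R -> R) (x : R) : R :=
  RInt (fun y => K (x - y) * f y) 0 L.

Definition L1norm (N : nat) (L : R) (g : nat -> R -> R) : R :=
  sum_f_R0 (fun i => RInt (fun x => Rabs (g i x)) 0 L) (N - 1).

Definition potential (N : nat) (L : R) (h : nat -> nat -> R) (K : R -> R)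
  (u : nat -> R -> R -> R) (i : nat) (x t : R) : R :=
  sum_f_R0 (fun j => h i j * conv L K (fun y => u j y t) x) (N - 1).

Definition flux (N : nat) (L : R) (h : nat -> nat -> R) (K : R -> R)
  (u : nat -> R -> R -> R) (i : nat) (x t : R) : R :=
  u i x t * Derive (fun z => potential N L h K u i z t) x.

Definition cont_within_tnonneg (f : R -> R -> R) (x t : R) : Prop :=
  filterlim (fun p : R * R => f (fst p) (snd p))
    (within (fun p : R * R => 0 <= snd p) (locally (x, t)))
    (locally (f x t)).

Definition cont2 (f : R -> R -> R) (x t : R) : Prop :=
  continuous (fun p : R * R => f (fst p) (snd p)) (x, t).

(* Main.v *)
Require Import Defs.
From Stdlib Require Import Reals Lra Lia Classical ClassicalEpsilon.
From Coquelicot Require Import Coquelicot.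
Open Scope R_scope.

Lemma exRI (G : R -> R) a b : (forall z, continuous G z) -> ex_RInt G a b.
Proof. intros H. apply (@ex_RInt_continuous R_CompleteNormedModule). intros; apply H. Qed.

Lemma per_shift (G : R -> R) L : (forall z, continuous G z) -> (forall z, G (z + L) = G z) ->
  forall a, RInt G a (a + L) = RInt G 0 L.
Proof.
  intros Hc Hp a.
  assert (H1 : RInt G L (a + L) = RInt G 0 a).
  { assert (E := RInt_comp_lin G 1 L 0 a).
    replace (1 * 0 + L) with L in E by ring. replace (1 * a + L) with (a + L) in E by ring.
    rewrite <- E by (apply exRI; exact Hc).
    apply RInt_ext. intros x _. change (scal 1 (G (1*x+L))) with (1 * G (1*x+L)). rewrite !Rmult_1_l. apply Hp. }
  assert (H2 : plus (RInt G a 0) (RInt G 0 (a + L)) = RInt G a (a + L)) by (apply RInt_Chasles; apply exRI; exact Hc).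
  assert (H3 : plus (RInt G 0 L) (RInt G L (a + L)) = RInt G 0 (a + L)) by (apply RInt_Chasles; apply exRI; exact Hc).
  assert (H4 : opp (RInt G 0 a) = RInt G a 0) by (apply opp_RInt_swap; apply exRI; exact Hc).
  rewrite <- H2, <- H3, <- H4, H1. unfold plus, opp; simpl. ring.
Qed.

Lemma conv_rw (K f : R -> R) L x : (forall z, continuous K z) -> (forall z, continuous f z) ->
  (forall z, K (z + L) = K z) -> (forall z, f (z + L) = f z) ->
  RInt (fun y => K (x - y) * f y) 0 L = RInt (fun z => K z * f (x - z)) 0 L.
Proof.
  intros HK Hf HKp Hfp.
  set (G := fun z => K z * f (x - z)).
  assert (HGc : forall z, continuous G z).
  { intros z. unfold G. apply (continuous_mult K (fun z => f (x - z))). apply HK.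
    apply (continuous_comp (fun z => x - z) f). apply (continuous_minus (fun _ => x) (fun z => z)).
    apply continuous_const. apply continuous_id. apply Hf. }
  assert (HGp : forall z, G (z + L) = G z).
  { intros z. unfold G. rewrite HKp. f_equal. rewrite <- (Hfp (x - (z + L))). f_equal. ring. }
  change (RInt (fun z => K z * f (x - z)) 0 L) with (RInt G 0 L).
  rewrite <- (per_shift G L HGc HGp (x - L)). replace (x - L + L) with x by ring.
  assert (E := RInt_comp_lin G (-1) x 0 L).
  replace (-1 * 0 + x) with x in E by ring. replace (-1 * L + x) with (x - L) in E by ring.
  rewrite <- (opp_RInt_swap G x (x - L)) by (apply exRI; exact HGc).
  rewrite <- E by (apply exRI; exact HGc).
  rewrite <- RInt_opp.
  - apply RInt_ext. intros y _. unfold G, scal, opp; simpl. unfold mult; simpl.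
    replace (-1 * y + x) with (x - y) by ring. replace (x - (x - y)) with y by ring. ring.
  - apply (@ex_RInt_continuous R_CompleteNormedModule). intros z _.
    apply (continuous_ext (fun y => (-1) * G (x - y))).
    { intros y. unfold scal; simpl; unfold mult; simpl. f_equal. f_equal. ring. }
    apply (continuous_mult (fun _ => -1) (fun y => G (x - y))). apply continuous_const.
    apply (continuous_comp (fun z => x - z) G). apply (continuous_minus (fun _ => x) (fun z => z)).
    apply continuous_const. apply continuous_id. apply HGc.
Qed.

Lemma cont_minus_c (G : R -> R) c z : (forall z, continuous G z) -> continuous (fun y => G (c - y)) z.
Proof. intros HG. apply (continuous_comp (fun z => c - z) G). apply (continuous_minus (fun _ => c) (fun z => z)).
    apply continuous_const. apply continuous_id. apply HG. Qed.

Lemma dconv (K g : R -> R) L x : (forall z, continuous K z) -> (forall z, ex_derive g z) ->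
  (forall z, continuous (Derive g) z) ->
  is_derive (fun x => RInt (fun z => K z * g (x - z)) 0 L) x (RInt (fun z => K z * Derive g (x - z)) 0 L).
Proof.
  intros HK Hg Hg'.
  assert (Hd : forall v u, is_derive (fun z => K v * g (z - v)) u (K v * Derive g (u - v))).
  { intros v u. apply is_derive_scal.
    assert (H1 : is_derive (fun z => z - v) u 1). { auto_derive; auto; ring. }
    assert (Hc := is_derive_comp g (fun z => z - v) u (Derive g (u - v)) 1 (Derive_correct _ _ (Hg _)) H1).
    unfold scal in Hc; simpl in Hc; unfold mult in Hc; simpl in Hc; rewrite Rmult_1_l in Hc.
    exact Hc. }
  assert (E : RInt (fun z => K z * Derive g (x - z)) 0 L = RInt (fun t => Derive (fun u => K t * g (u - t)) x) 0 L).
  { apply RInt_ext. intros t _. symmetry. apply is_derive_unique. apply Hd. }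
  rewrite E. clear E.
  apply (is_derive_RInt_param (fun x z => K z * g (x - z))).
  - apply filter_forall. intros x0 t _. eexists. apply Hd.
  - intros t _. apply continuity_2d_pt_ext with (fun u v => K v * Derive g (u - v)).
    { intros u v. symmetry. apply is_derive_unique. apply Hd. }
    apply continuity_2d_pt_mult.
    + apply (continuity_1d_2d_pt_comp K (fun u v => v)). apply continuity_pt_filterlim. apply HK.
      apply continuity_2d_pt_id2.
    + apply (continuity_1d_2d_pt_comp (Derive g) (fun u v => u - v)). apply continuity_pt_filterlim. apply Hg'.
      apply continuity_2d_pt_minus. apply continuity_2d_pt_id1. apply continuity_2d_pt_id2.
  - apply filter_forall. intros y. apply (@ex_RInt_continuous R_CompleteNormedModule). intros z _.
    apply (continuous_mult K (fun z => g (y - z))). apply HK. apply cont_minus_c.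
    intros w. apply (@ex_derive_continuous R_AbsRing R_NormedModule). apply Hg.
Qed.

Lemma sum_derive (F : nat -> R -> R) (F' : nat -> R) x n :
  (forall j, (j <= n)%nat -> is_derive (F j) x (F' j)) ->
  is_derive (fun y => sum_f_R0 (fun j => F j y) n) x (sum_f_R0 F' n).
Proof.
  induction n as [|n IH]; intros H; simpl.
  - apply H. lia.
  - apply (is_derive_plus (fun y => sum_f_R0 (fun j => F j y) n) (F (S n))).
    apply IH. intros j Hj. apply H. lia. apply H. lia.
Qed.


Definition P1 N L (h : nat -> nat -> R) (K : R -> R) (u : nat -> R -> R -> R) i t x :=
  sum_f_R0 (fun j => h i j * RInt (fun z => K z * Derive (fun w => u j w t) (x - z)) 0 L) (N-1).
Definition P2 N L (h : nat -> nat -> R) (K : R -> R) (u : nat -> R -> R -> R) i t x :=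
  sum_f_R0 (fun j => h i j * RInt (fun z => K z * Derive (Derive (fun w => u j w t)) (x - z)) 0 L) (N-1).

Lemma flux_deriv N L h K (u : nat -> R -> R -> R) i t x :
 (1 <= N)%nat -> (i < N)%nat -> (forall z, continuous K z) -> (forall z, K (z + L) = K z) ->
 (forall j, (j < N)%nat -> forall z, ex_derive (fun w => u j w t) z) ->
 (forall j, (j < N)%nat -> forall z, ex_derive (Derive (fun w => u j w t)) z) ->
 (forall j, (j < N)%nat -> forall z, continuous (Derive (fun w => u j w t)) z) ->
 (forall j, (j < N)%nat -> forall z, continuous (Derive (Derive (fun w => u j w t))) z) ->
 (forall j, (j < N)%nat -> forall z, u j (z + L) t = u j z t) ->
 is_derive (fun z => flux N L h K u i z t) x
   (Derive (fun w => u i w t) x * P1 N L h K u i t x + u i x t * P2 N L h K u i t x).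
Proof.
  intros HN Hi HK HKp Hd1 Hd2 Hc1 Hc2 Hp.
  assert (HP : forall y, potential N L h K u i y t =
     sum_f_R0 (fun j => h i j * RInt (fun z => K z * u j (y - z) t) 0 L) (N-1)).
  { intros y. unfold potential, conv. apply sum_eq. intros j Hj. f_equal.
    apply (conv_rw K (fun w => u j w t)). exact HK.
    intros z. apply (@ex_derive_continuous R_AbsRing R_NormedModule). apply Hd1. lia.
    exact HKp. apply Hp. lia. }
  assert (HD1 : forall y, is_derive (fun y => potential N L h K u i y t) y (P1 N L h K u i t y)).
  { intros y. apply is_derive_ext with (fun y => sum_f_R0 (fun j => h i j * RInt (fun z => K z * u j (y - z) t) 0 L) (N-1)).
    { intros; symmetry; apply HP. }
    unfold P1. apply (sum_derive (fun j y => h i j * RInt (fun z => K z * u j (y - z) t) 0 L)).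
    intros j Hj. apply is_derive_scal. apply (dconv K (fun w => u j w t)). exact HK.
    apply Hd1; lia. apply Hc1; lia. }
  assert (HD2 : is_derive (P1 N L h K u i t) x (P2 N L h K u i t x)).
  { unfold P1, P2. apply (sum_derive (fun j y => h i j * RInt (fun z => K z * Derive (fun w => u j w t) (y - z)) 0 L)).
    intros j Hj. apply is_derive_scal. apply (dconv K (Derive (fun w => u j w t))). exact HK.
    apply Hd2; lia. apply Hc2; lia. }
  apply is_derive_ext with (fun z => u i z t * P1 N L h K u i t z).
  { intros z. unfold flux. f_equal. symmetry. apply is_derive_unique. apply HD1. }
  assert (M := is_derive_mult (fun z => u i z t) (P1 N L h K u i t) x _ _ (Derive_correct _ _ (Hd1 i Hi x)) HD2 Rmult_comm).
  exact M.
Qed.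

Lemma cover1 (F : R -> R -> Prop) c d del : 0 < del -> c <= d ->
  (forall s, c <= s <= d -> exists B, forall t, c <= t <= d -> Rabs (t - s) < del -> F t B) ->
  (forall t B B', B <= B' -> F t B -> F t B') ->
  exists B, forall t, c <= t <= d -> F t B.
Proof.
  intros Hd Hcd Hloc Hmono.
  assert (Hn : forall n : nat, exists B, forall t, c <= t <= d -> t <= c + INR n * (del / 2) -> F t B).
  { induction n as [|n [B IH]].
    - destruct (Hloc c) as [B HB]. lra. exists B. intros t Ht Ht'. simpl in Ht'. apply HB. lra.
      replace (t - c) with 0 by lra. rewrite Rabs_R0. lra.
    - set (s := Rmin d (c + INR (S n) * (del / 2))).
      assert (Hs : c <= s <= d).
      { unfold s. split. apply Rmin_glb. lra. assert (0 <= INR (S n)) by apply pos_INR. nra. apply Rmin_l. }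
      destruct (Hloc s Hs) as [B' HB']. exists (Rmax B B'). intros t Ht Ht'.
      destruct (Rle_or_lt t (c + INR n * (del / 2))) as [Hle|Hlt].
      + apply Hmono with B. apply Rmax_l. apply IH; assumption.
      + apply Hmono with B'. apply Rmax_r. apply HB'. exact Ht.
        rewrite S_INR in Ht'. unfold s. unfold Rmin. rewrite S_INR.
        destruct (Rle_dec d (c + (INR n + 1) * (del / 2))); apply Rabs_def1; lra. }
  destruct (nfloor_ex ((d - c) / (del / 2))) as [n Hn'].
  { apply Rdiv_le_0_compat; lra. }
  destruct (Hn (S n)) as [B HB]. exists B. intros t Ht. apply HB. exact Ht.
  rewrite S_INR. destruct Hn' as [_ Hn'].
  apply Rmult_lt_compat_r with (r := del / 2) in Hn'. 2: lra.
  unfold Rdiv at 1 in Hn'. rewrite Rmult_assoc, Rinv_l, Rmult_1_r in Hn' by lra. lra.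
Qed.

Lemma bound2d (f : R -> R -> R) a b c d : a <= b -> c <= d ->
  (forall x y, a <= x <= b -> c <= y <= d -> continuity_2d_pt f x y) ->
  exists B, forall x t, a <= x <= b -> c <= t <= d -> Rabs (f x t) <= B.
Proof.
  intros Hab Hcd Hc.
  destruct (uniform_continuity_2d f a b c d Hc (mkposreal 1 Rlt_0_1)) as [del Hdel]. simpl in Hdel.
  destruct (cover1 (fun t B => forall x, a <= x <= b -> Rabs (f x t) <= B) c d del) as [B HB].
  apply cond_pos. exact Hcd.
  2: { intros t B B' HBB H x Hx. specialize (H x Hx). lra. }
  2: { exists B. intros x t Hx Ht. apply HB; assumption. }
  intros s Hs.
  destruct (cover1 (fun x B => forall t, c <= t <= d -> Rabs (t - s) < del -> Rabs (f x t) <= B) a b del) as [B HB].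
  apply cond_pos. exact Hab.
  - intros x0 Hx0. exists (Rabs (f x0 s) + 1). intros x Hx Hxx t Ht Hts.
    assert (H := Hdel x0 s x t Hx0 Hs Hx Ht Hxx Hts).
    assert (Rabs (f x t) <= Rabs (f x0 s) + Rabs (f x t - f x0 s)).
    { replace (f x t) with (f x0 s + (f x t - f x0 s)) at 1 by ring. apply Rabs_triang. }
    lra.
  - intros x B B' HBB H t Ht Hts. specialize (H t Ht Hts). lra.
  - exists B. intros t Ht Hts x Hx. apply HB; assumption.
Qed.

Lemma unif_pos (f : R -> R -> R) a b t1 :
  (forall x, a <= x <= b -> exists rho, 0 < rho /\ forall x' t, Rabs (x' - x) < rho -> t1 <= t < t1 + rho -> 0 < f x' t) ->
  exists d, 0 < d /\ forall x t, a <= x <= b -> t1 <= t < t1 + d -> 0 < f x t.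
Proof.
  intros H.
  assert (Hs : forall x, {rho : posreal | a <= x <= b -> forall x' t, Rabs (x' - x) < rho -> t1 <= t < t1 + rho -> 0 < f x' t}).
  { intros x. apply constructive_indefinite_description.
    destruct (classic (a <= x <= b)) as [Hx|Hx].
    - destruct (H x Hx) as [r [Hr Hr']]. exists (mkposreal r Hr). intros _. exact Hr'.
    - exists (mkposreal 1 Rlt_0_1). intros Hx'. contradiction. }
  destruct (compactness_value_1d a b (fun x => proj1_sig (Hs x))) as [d Hd].
  exists d. split. apply cond_pos. intros x t Hx Ht.
  apply NNPP. intros Hn. apply (Hd x Hx). intros [t0 [Ht0 [Hxt Hdt]]].
  apply Hn. apply (proj2_sig (Hs t0) Ht0). exact Hxt. lra.
Qed.

Lemma per_nat (f : R -> R) L : (forall x, f (x + L) = f x) -> forall n y, f (y + INR n * L) = f y.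
Proof.
  intros Hp n. induction n as [|n IH]; intros y. simpl. f_equal. ring.
  rewrite S_INR. replace (y + (INR n + 1) * L) with ((y + INR n * L) + L) by ring. rewrite Hp. apply IH.
Qed.

Lemma per_red (f : R -> R) L : 0 < L -> (forall x, f (x + L) = f x) -> forall x, exists y, 0 <= y <= L /\ f x = f y.
Proof.
  intros HL Hp x.
  destruct (Rle_or_lt 0 x) as [Hx|Hx].
  - destruct (nfloor_ex (x / L)) as [n Hn]. apply Rdiv_le_0_compat; lra.
    exists (x - INR n * L). split.
    + destruct Hn as [H1 H2].
      apply Rmult_le_compat_r with (r := L) in H1. 2: lra.
      apply Rmult_lt_compat_r with (r := L) in H2. 2: lra.
      unfold Rdiv in *. rewrite Rmult_assoc, Rinv_l, Rmult_1_r in H1, H2 by lra. rewrite Rmult_plus_distr_r in H2. try rewrite Rmult_plus_distr_r. lra.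
    + rewrite <- (per_nat f L Hp n (x - INR n * L)). f_equal. ring.
  - destruct (nfloor_ex (- x / L)) as [n Hn]. apply Rdiv_le_0_compat; lra.
    exists (x + INR (S n) * L). split.
    + destruct Hn as [H1 H2]. rewrite S_INR.
      apply Rmult_le_compat_r with (r := L) in H1. 2: lra.
      apply Rmult_lt_compat_r with (r := L) in H2. 2: lra.
      unfold Rdiv in *. rewrite Rmult_assoc, Rinv_l, Rmult_1_r in H1, H2 by lra. rewrite Rmult_plus_distr_r in H2. try rewrite Rmult_plus_distr_r. lra.
    + rewrite per_nat by exact Hp. reflexivity.
Qed.

Lemma fermat (g : R -> R) x1 l : (forall y, g x1 <= g y) -> is_derive g x1 l -> l = 0.
Proof.
  intros Hm Hd. apply is_derive_Reals in Hd.
  destruct (Req_dec l 0) as [E|E]. exact E. exfalso.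
  destruct (Hd (Rabs l) (Rabs_pos_lt l E)) as [del Hdel].
  assert (Hdp := cond_pos del).
  destruct (Rlt_or_le 0 l) as [Hl|Hl].
  - assert (H := Hdel (- (del / 2))). rewrite (Rabs_pos_eq l) in H by lra.
    assert (H' : Rabs ((g (x1 + - (del / 2)) - g x1) / - (del / 2) - l) < l).
    { apply H. lra. rewrite Rabs_Ropp, Rabs_pos_eq; lra. }
    assert (Hq : (g (x1 + - (del / 2)) - g x1) / - (del / 2) <= 0).
    { unfold Rdiv. rewrite <- Ropp_inv_permute by lra.
      assert (0 <= g (x1 + - (del / 2)) - g x1) by (specialize (Hm (x1 + - (del/2))); lra).
      assert (0 < / (del / 2)) by (apply Rinv_0_lt_compat; lra). nra. }
    apply Rabs_def2 in H'. lra.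
  - assert (Hl' : l < 0) by lra.
    assert (H := Hdel (del / 2)). rewrite (Rabs_left l) in H by lra.
    assert (H' : Rabs ((g (x1 + del / 2) - g x1) / (del / 2) - l) < - l).
    { apply H. lra. rewrite Rabs_pos_eq; lra. }
    assert (Hq : 0 <= (g (x1 + del / 2) - g x1) / (del / 2)).
    { apply Rdiv_le_0_compat. specialize (Hm (x1 + del/2)); lra. lra. }
    apply Rabs_def2 in H'. lra.
Qed.

Lemma second_test (g : R -> R) x1 : (forall y, g x1 <= g y) -> (forall y, ex_derive g y) ->
  ex_derive (Derive g) x1 -> 0 <= Derive (Derive g) x1.
Proof.
  intros Hm Hg H2.
  assert (H0 : Derive g x1 = 0) by (apply (fermat g x1); [exact Hm | apply Derive_correct, Hg]).
  destruct (Rle_or_lt 0 (Derive (Derive g) x1)) as [H|H]. exact H. exfalso.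
  set (a := Derive (Derive g) x1) in *.
  assert (Hd := Derive_correct _ _ H2). fold a in Hd. apply is_derive_Reals in Hd.
  destruct (Hd (- a / 2)) as [del Hdel]. lra.
  assert (Hdp := cond_pos del).
  assert (Hneg : forall c, x1 < c < x1 + del / 2 -> Derive g c < 0).
  { intros c Hc. assert (H' := Hdel (c - x1)). replace (x1 + (c - x1)) with c in H' by ring.
    rewrite H0 in H'. rewrite Rminus_0_r in H'.
    assert (Hl : Rabs (Derive g c / (c - x1) - a) < - a / 2).
    { apply H'. lra. rewrite Rabs_pos_eq; lra. }
    apply Rabs_def2 in Hl. destruct Hl as [Hl _].
    assert (Hq : Derive g c / (c - x1) < 0) by lra.
    destruct (Rle_or_lt 0 (Derive g c)) as [Hc'|Hc']; [|exact Hc'].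
    assert (0 <= Derive g c / (c - x1)) by (apply Rdiv_le_0_compat; lra). lra. }
  destruct (MVT_cor2 g (Derive g) x1 (x1 + del / 2)) as [c [Hc1 Hc2]]. lra.
  { intros c _. apply is_derive_Reals. apply Derive_correct. apply Hg. }
  specialize (Hneg c Hc2). specialize (Hm (x1 + del / 2)).
  assert (Derive g c * (x1 + del / 2 - x1) < 0). { replace (x1 + del/2 - x1) with (del/2) by ring. nra. }
  lra.
Qed.

Lemma left_sign (w : R -> R) t1 l del : is_derive w t1 l -> w t1 = 0 -> del < t1 ->
  (forall r, del <= r < t1 -> 0 < w r) -> l <= 0.
Proof.
  intros Hd Hw Hdel Hpos. apply is_derive_Reals in Hd.
  destruct (Rle_or_lt l 0) as [H|H]. exact H. exfalso.
  destruct (Hd l H) as [e He]. assert (Hep := cond_pos e).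
  set (k := Rmin e (t1 - del) / 2).
  assert (Hk : 0 < k <= e / 2 /\ k <= (t1 - del) / 2).
  { unfold k. split. split. apply Rdiv_lt_0_compat. apply Rmin_glb_lt; lra. lra.
    assert (Rmin e (t1 - del) <= e) by apply Rmin_l. lra.
    assert (Rmin e (t1 - del) <= t1 - del) by apply Rmin_r. lra. }
  assert (H1 : Rabs ((w (t1 + - k) - w t1) / - k - l) < l).
  { apply He. lra. rewrite Rabs_Ropp, Rabs_pos_eq; lra. }
  apply Rabs_def2 in H1. destruct H1 as [_ H1].
  rewrite Hw, Rminus_0_r in H1.
  assert (Hp : 0 < w (t1 + - k)) by (apply Hpos; lra).
  assert (Hq : w (t1 + - k) / - k < 0).
  { unfold Rdiv. rewrite <- Ropp_inv_permute by lra.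
    assert (0 < / k) by (apply Rinv_0_lt_compat; lra). nra. }
  lra.
Qed.

Lemma P2_bound N L h K (u : nat -> R -> R -> R) i t x B :
  0 < L -> 0 <= x <= L -> (forall z, 0 <= K z) -> RInt K 0 L = 1 -> (forall z, continuous K z) ->
  (forall j, (j < N)%nat -> forall z, continuous (Derive (Derive (fun w => u j w t))) z) ->
  (forall j y, (j < N)%nat -> -L <= y <= L -> Rabs (Derive (Derive (fun w => u j w t)) y) <= B) ->
  (1 <= N)%nat ->
  Rabs (P2 N L h K u i t x) <= sum_f_R0 (fun j => Rabs (h i j) * B) (N-1).
Proof.
  intros HL Hx HKp HK1 HKc Hc HB HN.
  unfold P2. eapply Rle_trans. apply sum_f_R0_triangle. apply sum_Rle. intros j Hj.
  rewrite Rabs_mult. apply Rmult_le_compat_l. apply Rabs_pos.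
  set (g := Derive (Derive (fun w => u j w t))).
  assert (Hgc : forall z, continuous g z) by (apply Hc; lia).
  assert (Hfc : forall z, continuous (fun z => K z * g (x - z)) z).
  { intros z. apply (continuous_mult K (fun z => g (x - z))). apply HKc. apply cont_minus_c. exact Hgc. }
  eapply Rle_trans. apply abs_RInt_le. lra. apply exRI. exact Hfc.
  apply Rle_trans with (RInt (fun z => B * K z) 0 L).
  - apply RInt_le. lra.
    + apply exRI. intros z. apply (continuous_comp (fun z => K z * g (x - z)) Rabs). apply Hfc.
      apply continuous_Rabs.
    + apply exRI. intros z. apply (continuous_mult (fun _ => B) K). apply continuous_const. apply HKc.
    + intros z Hz. rewrite Rabs_mult, (Rabs_pos_eq (K z)) by apply HKp.
      rewrite Rmult_comm. apply Rmult_le_compat_r. apply HKp.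
      apply HB. lia. lra.
  - assert (E : RInt (fun z => B * K z) 0 L = B * RInt K 0 L).
    { exact (RInt_scal K 0 L B (exRI K 0 L HKc)). }
    rewrite E, HK1. lra.
Qed.
Lemma c2_eps f x t : cont2 f x t -> forall eps, 0 < eps -> exists rho, 0 < rho /\
  forall x' t', Rabs (x' - x) < rho -> Rabs (t' - t) < rho -> Rabs (f x' t' - f x t) < eps.
Proof.
  intros H eps He. apply continuity_2d_pt_filterlim in H.
  destruct (H (mkposreal eps He)) as [d Hd]. exists d. split. apply cond_pos. exact Hd.
Qed.

Lemma cw_eps f x t : cont_within_tnonneg f x t -> forall eps, 0 < eps -> exists rho, 0 < rho /\
  forall x' t', Rabs (x' - x) < rho -> Rabs (t' - t) < rho -> 0 <= t' -> Rabs (f x' t' - f x t) < eps.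
Proof.
  intros H eps He. unfold cont_within_tnonneg in H. rewrite filterlim_locally in H.
  destruct (H (mkposreal eps He)) as [d Hd]. exists d. split. apply cond_pos.
  intros x' t' H1 H2 H3. apply (Hd (x', t')). split; assumption. exact H3.
Qed.

Lemma eps_cont (g : R -> R) x : (forall eps, 0 < eps -> exists rho, 0 < rho /\ forall y, Rabs (y - x) < rho -> Rabs (g y - g x) < eps) -> continuous g x.
Proof.
  intros H. apply filterlim_locally. intros eps. destruct (H eps (cond_pos eps)) as [r [Hr Hy]].
  exists (mkposreal r Hr). intros y Hy'. apply Hy. exact Hy'.
Qed.

Lemma c2_slice f x t : cont2 f x t -> continuous (fun z => f z t) x.
Proof.
  intros H. apply eps_cont. intros eps He. destruct (c2_eps f x t H eps He) as [r [Hr Hy]].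
  exists r. split. exact Hr. intros y Hy'. apply Hy. exact Hy'. rewrite Rminus_diag, Rabs_R0. exact Hr.
Qed.

Lemma rbar_le_lt (s t : R) (T : Rbar) : s <= t -> Rbar_lt t T -> Rbar_lt s T.
Proof. intros H1 H2. destruct T; simpl in *; try lra; auto. Qed.

Lemma unif_bound (P : nat -> R -> Prop) N :
  (forall j B B', B <= B' -> P j B -> P j B') -> (forall j, (j < N)%nat -> exists B, P j B) ->
  exists B, forall j, (j < N)%nat -> P j B.
Proof.
  intros Hm. induction N as [|N IH]; intros H.
  - exists 0. intros j Hj. lia.
  - destruct IH as [B1 HB1]. intros j Hj. apply H. lia.
    destruct (H N) as [B2 HB2]. lia.
    exists (Rmax B1 B2). intros j Hj. destruct (Nat.eq_dec j N) as [->|Hne].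
    + apply Hm with B2. apply Rmax_r. exact HB2.
    + apply Hm with B1. apply Rmax_l. apply HB1. lia.
Qed.

Theorem lemma3p9
  (L : R) (N : nat) (D : nat -> R) (h : nat -> nat -> R) (K : R -> R)
  (u0 : nat -> R -> R) (u : nat -> R -> R -> R) (Tstar : Rbar)
  (* parameters *)
  (HL : 0 < L) (HN : (1 <= N)%nat)
  (HD : forall i, (i < N)%nat -> 0 < D i)
  (* kernel: nonnegative, periodic, probability density with zero mean,
     twice differentiable, K' bounded *)
  (HKper : periodic L K)
  (HKpos : forall x, 0 <= K x)
  (HKmass : RInt K 0 L = 1)
  (HKmean : RInt (fun x => x * K x) (- (L / 2)) (L / 2) = 0)
  (HK1 : forall x, ex_derive K x)
  (HK2 : forall x, ex_derive (Derive K) x)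
  (HK'bnd : exists M, forall x, Rabs (Derive K x) <= M)
  (* initial datum: C^2, periodic, positive *)
  (Hu0per : forall i, (i < N)%nat -> periodic L (u0 i))
  (Hu0d1 : forall i x, (i < N)%nat -> ex_derive (u0 i) x)
  (Hu0d2 : forall i x, (i < N)%nat -> ex_derive (Derive (u0 i)) x)
  (Hu0c2 : forall i x, (i < N)%nat -> continuous (Derive_n (u0 i) 2) x)
  (Hu0pos : forall i x, (i < N)%nat -> 0 < u0 i x)
  (* maximal time *)
  (HTpos : Rbar_lt 0 Tstar)
  (HTdef :
     (Tstar = p_infty /\
        exists M, forall t, 0 <= t -> L1norm N L (fun i x => u i x t) <= M)
     \/
     (exists T, Tstar = Finite T /\
        filterlim (fun t => L1norm N L (fun i x => u i x t)) (at_left T)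
          (locally (2 * L1norm N L u0)) /\
        forall t, 0 <= t < T ->
          L1norm N L (fun i x => u i x t) <> 2 * L1norm N L u0))
  (* the (classical) solution *)
  (Hinit : forall i x, (i < N)%nat -> u i x 0 = u0 i x)
  (Hper : forall i t, (i < N)%nat -> 0 <= t -> Rbar_lt t Tstar ->
            periodic L (fun x => u i x t))
  (Hcont : forall i x t, (i < N)%nat -> 0 <= t -> Rbar_lt t Tstar ->
            cont_within_tnonneg (u i) x t)
  (Hdx1 : forall i x t, (i < N)%nat -> 0 < t -> Rbar_lt t Tstar ->
            ex_derive (fun z => u i z t) x)
  (Hdx2 : forall i x t, (i < N)%nat -> 0 < t -> Rbar_lt t Tstar ->
            ex_derive (fun z => Derive (fun w => u i w t) z) x)
  (Hcdx1 : forall i x t, (i < N)%nat -> 0 < t -> Rbar_lt t Tstar ->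
            cont2 (fun z s => Derive (fun w => u i w s) z) x t)
  (Hcdx2 : forall i x t, (i < N)%nat -> 0 < t -> Rbar_lt t Tstar ->
            cont2 (fun z s => Derive_n (fun w => u i w s) 2 z) x t)
  (Hflux : forall i x t, (i < N)%nat -> 0 < t -> Rbar_lt t Tstar ->
            ex_derive (fun z => flux N L h K u i z t) x)
  (Hpde : forall i x t, (i < N)%nat -> 0 < t -> Rbar_lt t Tstar ->
            is_derive (fun s => u i x s) t
              (D i * Derive_n (fun z => u i z t) 2 x
               - Derive (fun z => flux N L h K u i z t) x)) :
  forall i x t, (i < N)%nat -> 0 <= t -> Rbar_lt t Tstar -> 0 < u i x t.
Proof.
  intros i x0 t0 Hi Ht0 HtT.
  assert (HKc : forall z, continuous K z).
  { intros z. apply (@ex_derive_continuous R_AbsRing R_NormedModule). apply HK1. }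
  destruct (Req_dec t0 0) as [E0|Ht0'].
  { subst t0. rewrite Hinit by exact Hi. apply Hu0pos, Hi. }
  assert (Ht0p : 0 < t0) by lra. clear Ht0'.
  destruct (continuity_ab_min (u0 i) 0 L) as [mx [Hmx Hmx']]. lra.
  { intros c _. apply continuity_pt_filterlim. apply (@ex_derive_continuous R_AbsRing R_NormedModule).
    apply Hu0d1, Hi. }
  set (m := u0 i mx). assert (Hm : 0 < m) by (apply Hu0pos, Hi).
  set (mu := m / 2). assert (Hmu : 0 < mu) by (unfold mu; lra).
  destruct (unif_pos (fun x t => u i x t - mu) 0 L 0) as [d [Hd Hd']].
  { intros x Hx. destruct (cw_eps (u i) x 0 (Hcont i x 0 Hi (Rle_refl 0) HTpos) (m / 2)) as [r [Hr Hr']]. lra.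
    exists r. split. exact Hr. intros x' s Hx' Hs. rewrite Hinit in Hr' by exact Hi.
    assert (H := Hr' x' s Hx'). rewrite Rminus_0_r, Rabs_pos_eq in H by lra.
    specialize (H ltac:(lra) (proj1 Hs)). apply Rabs_def2 in H. specialize (Hmx x Hx). fold m in Hmx.
    unfold mu. lra. }
  set (del := Rmin (d / 2) t0).
  assert (Hdel : 0 < del <= t0 /\ del < d).
  { unfold del. split. split. apply Rmin_glb_lt; lra. apply Rmin_r.
    assert (Rmin (d/2) t0 <= d / 2) by apply Rmin_l. lra. }
  destruct (unif_bound (fun j B => forall y s, -L <= y <= L -> del <= s <= t0 ->
              Rabs (Derive_n (fun w => u j w s) 2 y) <= B) N) as [B HB].
  { intros j B B' HBB H y s Hy Hs. specialize (H y s Hy Hs). lra. }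
  { intros j Hj. apply bound2d. lra. lra. intros y s _ Hs.
    apply continuity_2d_pt_filterlim. apply (Hcdx2 j y s Hj). lra.
    apply rbar_le_lt with t0. lra. exact HtT. }
  set (C := sum_f_R0 (fun j => Rabs (h i j) * B) (N-1)).
  set (lam := Rabs C + 1).
  set (v := fun x s => u i x s - mu * exp (- lam * s)).
  assert (Hexp_mono : forall r s, r <= s -> exp (- lam * s) <= exp (- lam * r)).
  { intros r s Hrs. destruct (Req_dec r s) as [->|Hne]. lra. left. apply exp_increasing.
    assert (0 < lam) by (unfold lam; assert (0 <= Rabs C) by apply Rabs_pos; lra). nra. }
  assert (Hvdel : forall x, 0 <= x <= L -> 0 < v x del).
  { intros x Hx. unfold v. assert (H := Hd' x del Hx ltac:(lra)).
    simpl in H. assert (exp (- lam * del) <= 1).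
    { assert (E : exp (- lam * 0) = 1) by (rewrite Rmult_0_r; apply exp_0). rewrite <- E. apply (Hexp_mono 0 del). lra. }
    assert (mu * exp (- lam * del) <= mu) by nra. lra. }
  assert (Hlam : 0 < lam) by (unfold lam; assert (0 <= Rabs C) by apply Rabs_pos; lra).
  assert (HTs : forall s, s <= t0 -> Rbar_lt s Tstar) by (intros s Hs; apply rbar_le_lt with t0; [exact Hs | exact HtT]).
  assert (Claim : forall s, del <= s <= t0 -> forall x, 0 <= x <= L -> 0 < v x s).
  { set (S := fun s => del <= s <= t0 /\ forall r, del <= r <= s -> forall x, 0 <= x <= L -> 0 < v x r).
    assert (HSb : bound S) by (exists t0; intros s [Hs _]; lra).
    assert (HSn : exists s, S s).
    { exists del. split. lra. intros r Hr x Hx. replace r with del by lra. apply Hvdel, Hx. }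
    destruct (completeness S HSb HSn) as [t1 [Hub Hlub]].
    assert (Ht1 : del <= t1 <= t0).
    { split. apply Hub. split. lra. intros r Hr z Hz. replace r with del by lra. apply Hvdel, Hz.
      apply Hlub. intros s [Hs _]. lra. }
    assert (F1 : forall r, del <= r < t1 -> forall x, 0 <= x <= L -> 0 < v x r).
    { intros r Hr x Hx. apply NNPP. intros Hn.
      assert (t1 <= r); [|lra]. apply Hlub. intros s [Hs Hs']. apply Rnot_lt_le. intros Hrs.
      apply Hn. apply Hs'. lra. exact Hx. }
    assert (F2 : forall x, 0 <= x <= L -> mu * exp (- lam * t1) <= u i x t1).
    { intros x Hx. destruct (Req_dec t1 del) as [E|Hne].
      - rewrite E. assert (H := Hvdel x Hx). unfold v in H. lra.
      - apply Rnot_lt_le. intros Hlt.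
        destruct (cw_eps (u i) x t1 (Hcont i x t1 Hi ltac:(lra) (HTs t1 ltac:(lra))) (mu * exp (- lam * t1) - u i x t1)) as [r [Hr Hr']]. lra.
        set (r0 := Rmax del (t1 - r / 2)).
        assert (Hr0 : del <= r0 < t1 /\ t1 - r / 2 <= r0).
        { unfold r0. split. split. apply Rmax_l. apply Rmax_lub_lt; lra. apply Rmax_r. }
        assert (H1 := Hr' x r0). rewrite Rminus_diag, Rabs_R0 in H1.
        assert (H2 : Rabs (r0 - t1) < r) by (rewrite Rabs_left by lra; lra).
        specialize (H1 Hr H2 ltac:(lra)). apply Rabs_def2 in H1.
        assert (H3 := F1 r0 (proj1 Hr0) x Hx). unfold v in H3.
        assert (H4 := Hexp_mono r0 t1 ltac:(lra)).
        assert (mu * exp (- lam * t1) <= mu * exp (- lam * r0)) by (apply Rmult_le_compat_l; lra).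
        lra. }
    destruct (classic (forall x, 0 <= x <= L -> 0 < v x t1)) as [HA|HB'].
    - destruct (Req_dec t1 t0) as [E|Hne].
      + intros s Hs x Hx. destruct (Req_dec s t1) as [->|Hne']. apply HA, Hx.
        apply F1. lra. exact Hx.
      + exfalso.
        destruct (unif_pos v 0 L t1) as [d1 [Hd1 Hd1']].
        { intros x Hx. assert (Hv := HA x Hx).
          destruct (cw_eps (u i) x t1 (Hcont i x t1 Hi ltac:(lra) (HTs t1 ltac:(lra))) (v x t1)) as [r [Hr Hr']]. exact Hv.
          exists r. split. exact Hr. intros x' s Hx' Hs.
          assert (H1 := Hr' x' s Hx'). rewrite Rabs_pos_eq in H1 by lra.
          specialize (H1 ltac:(lra) ltac:(lra)). apply Rabs_def2 in H1.
          assert (H4 := Hexp_mono t1 s ltac:(lra)).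
          assert (mu * exp (- lam * s) <= mu * exp (- lam * t1)) by (apply Rmult_le_compat_l; lra).
          unfold v in *. lra. }
        set (s1 := Rmin t0 (t1 + d1 / 2)).
        assert (Hs1 : t1 < s1 <= t0 /\ s1 < t1 + d1).
        { unfold s1. split. split. apply Rmin_glb_lt; lra. apply Rmin_l.
          assert (Rmin t0 (t1 + d1 / 2) <= t1 + d1 / 2) by apply Rmin_r. lra. }
        assert (S s1).
        { split. lra. intros r Hr x Hx. destruct (Rlt_or_le r t1) as [Hlt|Hge].
          apply F1. lra. exact Hx. apply Hd1'. exact Hx. lra. }
        assert (s1 <= t1) by (apply Hub; assumption). lra.
    - exfalso.
      apply not_all_ex_not in HB'. destruct HB' as [x1 Hx1].
      apply imply_to_and in Hx1. destruct Hx1 as [Hx1 Hv1]. apply Rnot_lt_le in Hv1.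
      assert (Hv1' : u i x1 t1 = mu * exp (- lam * t1)) by (assert (H := F2 x1 Hx1); unfold v in Hv1; lra).
      assert (Ht1d : del < t1).
      { destruct (Req_dec t1 del) as [E|Hne]. rewrite E in Hv1. assert (H := Hvdel x1 Hx1). lra. lra. }
      assert (Ht1p : 0 < t1) by lra.
      assert (Ht1T := HTs t1 (proj2 Ht1)).
      set (g := fun w => u i w t1).
      assert (Hgmin : forall y, g x1 <= g y).
      { intros y. destruct (per_red g L HL (Hper i t1 Hi ltac:(lra) Ht1T) y) as [y' [Hy' E]].
        rewrite E. unfold g. rewrite Hv1'. apply F2, Hy'. }
      assert (Hgd : forall y, ex_derive g y) by (intros y; apply Hdx1; assumption).
      assert (Hgdd : 0 <= Derive (Derive g) x1).
      { apply second_test. exact Hgmin. exact Hgd. exact (Hdx2 i x1 t1 Hi Ht1p Ht1T). }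
      assert (Hg0 : Derive g x1 = 0).
      { apply (fermat g x1). exact Hgmin. apply Derive_correct, Hgd. }
      assert (Hfl := flux_deriv N L h K u i t1 x1 HN Hi HKc HKper).
      assert (Hfl' : is_derive (fun z => flux N L h K u i z t1) x1
         (Derive (fun w => u i w t1) x1 * P1 N L h K u i t1 x1 + u i x1 t1 * P2 N L h K u i t1 x1)).
      { apply Hfl.
        - intros j Hj z. apply Hdx1; assumption.
        - intros j Hj z. exact (Hdx2 j z t1 Hj Ht1p Ht1T).
        - intros j Hj z. exact (c2_slice _ z t1 (Hcdx1 j z t1 Hj Ht1p Ht1T)).
        - intros j Hj z. exact (c2_slice _ z t1 (Hcdx2 j z t1 Hj Ht1p Ht1T)).
        - intros j Hj z. exact (Hper j t1 Hj ltac:(lra) Ht1T z). }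
      clear Hfl.
      assert (HP2 : Rabs (P2 N L h K u i t1 x1) <= C).
      { apply P2_bound; try assumption.
        - intros j Hj z. exact (c2_slice _ z t1 (Hcdx2 j z t1 Hj Ht1p Ht1T)).
        - intros j y Hj Hy. exact (HB j Hj y t1 Hy ltac:(lra)). }
      assert (Hfe : Derive (fun z => flux N L h K u i z t1) x1 = 0 * P1 N L h K u i t1 x1 + u i x1 t1 * P2 N L h K u i t1 x1).
      { apply is_derive_unique. fold g in Hfl'. rewrite Hg0 in Hfl'. exact Hfl'. }
      assert (Hpd := Hpde i x1 t1 Hi Ht1p Ht1T). rewrite Hfe in Hpd.
      assert (He : is_derive (fun s => mu * exp (- lam * s)) t1 (- lam * mu * exp (- lam * t1))).
      { auto_derive. auto. ring. }
      assert (Hw := is_derive_minus _ _ _ _ _ Hpd He).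
      assert (Hs := left_sign (fun s => minus (u i x1 s) (mu * exp (- lam * s))) t1 _ del Hw).
      assert (Hsign : minus (D i * Derive_n (fun z => u i z t1) 2 x1 - (0 * P1 N L h K u i t1 x1 + u i x1 t1 * P2 N L h K u i t1 x1))
                 (- lam * mu * exp (- lam * t1)) <= 0).
      { apply Hs. unfold minus, plus, opp; simpl. rewrite Hv1'. ring.
        exact Ht1d. intros r Hr. unfold minus, plus, opp; simpl. assert (H := F1 r Hr x1 Hx1). unfold v in H. lra. }
      unfold minus, plus, opp in Hsign; simpl in Hsign.
      change (Derive_n (fun z => u i z t1) 2 x1) with (Derive (Derive g) x1) in Hsign.
      rewrite Hv1' in Hsign.
      assert (HDi := HD i Hi).
      assert (0 <= D i * Derive (Derive g) x1) by (apply Rmult_le_pos; lra).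
      assert (HE : 0 < mu * exp (- lam * t1)) by (apply Rmult_lt_0_compat; [lra | apply exp_pos]).
      assert (HP2' : P2 N L h K u i t1 x1 < lam).
      { assert (P2 N L h K u i t1 x1 <= Rabs (P2 N L h K u i t1 x1)) by apply Rle_abs.
        assert (C <= Rabs C) by apply Rle_abs. unfold lam. lra. }
      assert (0 < mu * exp (- lam * t1) * (lam - P2 N L h K u i t1 x1)) by (apply Rmult_lt_0_compat; lra).
      change (Derive (fun x => Derive (fun x0 => u i x0 t1) x) x1) with (Derive (Derive g) x1) in Hsign.
      set (E := mu * exp (- lam * t1)) in *.
      replace (- (- lam * mu * exp (- lam * t1))) with (E * lam) in Hsign by (unfold E; ring).
      replace (0 * P1 N L h K u i t1 x1 + E * P2 N L h K u i t1 x1) with (E * P2 N L h K u i t1 x1) in Hsign by ring.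
      rewrite Rmult_minus_distr_l in H0. lra. }
  destruct (per_red (fun x => u i x t0) L HL (Hper i t0 Hi Ht0 HtT) x0) as [y [Hy E]].
  simpl in E. rewrite E. assert (H := Claim t0 ltac:(lra) y Hy). unfold v in H.
  assert (0 < mu * exp (- lam * t0)) by (apply Rmult_lt_0_compat; [lra | apply exp_pos]). lra.
Qed.
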